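(* Let $K, L$ be compact convex subsets of $\mathbb{R}^n$, and let $d \geq 2$ (with $d\le n$). Suppose that for every $d$-dimensional linear subspace $\xi$ of $\mathbb{R}^n$, the projection $L_\xi$ contains a translate of $K_\xi$. If $K$ and $L$ have the same diameter, then $L$ contains a translate of $K$.
   Context: For a set $S\subseteq\mathbb{R}^n$ and a linear subspace $\xi$, $S_\xi$ denotes the orthogonal projection of $S$ onto $\xi$. *)

(* Defs.v *)
From HB Require Import structures.
From mathcomp Require Import all_boot all_order all_algebra.
From mathcomp Require Import all_classical all_reals all_analysis.
Set Implicit Arguments. Unset Strict Implicit. Unset Printing Implicit Defensive.
Import Order.TTheory GRing.Theory Num.Theory.
Import numFieldNormedType.Exports.
Local Open Scope classical_set_scope.
Local Open Scope ring_scope.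

(* Euclidean norm on R^n (the library's default norm on matrices is the sup norm). *)
Definition enorm (R : realType) (n : nat) (x : 'rV[R]_n) : R :=
  Num.sqrt (\sum_(i < n) x ord0 i ^+ 2).

Definition diam (R : realType) (n : nat) (S : set 'rV[R]_n) : R :=
  sup [set enorm (x - y) | x in S & y in S].

Definition convex_set_Rn (R : realType) (n : nat) (S : set 'rV[R]_n) : Prop :=
  forall x y, S x -> S y -> forall l : R, 0 <= l <= 1 -> S (l *: x + (1 - l) *: y).

Definition is_orth_proj (R : realType) (n : nat) (V : 'M[R]_n) (x y : 'rV[R]_n) : Prop :=
  (y <= V)%MS /\ (x - y) *m V^T = 0.

(* Orthogonal projection S_xi of a set S onto xi = row space of V. *)
Definition proj_set (R : realType) (n : nat) (V : 'M[R]_n) (S : set 'rV[R]_n) : set 'rV[R]_n :=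
  [set y | exists2 x, S x & is_orth_proj V x y].

Definition contains_translate (R : realType) (n : nat) (B A : set 'rV[R]_n) : Prop :=
  exists t : 'rV[R]_n, [set a + t | a in A] `<=` B.

(* Main.v *)
Require Import Defs.
From HB Require Import structures.
From mathcomp Require Import all_boot all_order all_algebra.
From mathcomp Require Import all_classical all_reals all_analysis.
From mathcomp Require Import ring lra.
Set Implicit Arguments. Unset Strict Implicit. Unset Printing Implicit Defensive.
Import Order.TTheory GRing.Theory Num.Theory.
Import numFieldNormedType.Exports.
Local Open Scope classical_set_scope.
Local Open Scope ring_scope.

Section Alg.
Variables (R : realType) (n : nat).
Implicit Types (x y z u w : 'rV[R]_n) (V : 'M[R]_n).

Definition dot x y : R := \sum_(i < n) x ord0 i * y ord0 i.
Definition sq x := dot x x.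

Lemma dotC x y : dot x y = dot y x.
Proof. by apply: eq_bigr => i _; rewrite mulrC. Qed.

Lemma dotDl x y z : dot (x + y) z = dot x z + dot y z.
Proof. by rewrite /dot -big_split; apply: eq_bigr => i _; rewrite !mxE mulrDl. Qed.

Lemma dotNl x z : dot (- x) z = - dot x z.
Proof. by rewrite /dot -sumrN; apply: eq_bigr => i _; rewrite !mxE mulNr. Qed.

Lemma dotBl x y z : dot (x - y) z = dot x z - dot y z.
Proof. by rewrite dotDl dotNl. Qed.

Lemma dotDr x y z : dot z (x + y) = dot z x + dot z y.
Proof. by rewrite dotC dotDl !(dotC z). Qed.

Lemma dotBr x y z : dot z (x - y) = dot z x - dot z y.
Proof. by rewrite dotC dotBl !(dotC z). Qed.

Lemma dotZl (a : R) x z : dot (a *: x) z = a * dot x z.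
Proof. by rewrite /dot mulr_sumr; apply: eq_bigr => i _; rewrite !mxE mulrA. Qed.

Lemma dotZr (a : R) x z : dot z (a *: x) = a * dot z x.
Proof. by rewrite dotC dotZl dotC. Qed.

Lemma sq_ge0 x : 0 <= sq x.
Proof. by apply: sumr_ge0 => i _; rewrite -expr2 sqr_ge0. Qed.

Lemma sq_eq0 x : sq x = 0 -> x = 0.
Proof.
move=> h; apply/rowP => i; rewrite mxE.
have := psumr_eq0P (fun j _ => sqr_ge0 (x ord0 j)).
rewrite /sq /dot in h.
have h' : \sum_(j < n) x ord0 j ^+ 2 = 0.
  by rewrite (eq_bigr (fun j => x ord0 j * x ord0 j)) // => j _; rewrite expr2.
move=> /(_ xpredT h' i isT) /eqP; rewrite sqrf_eq0 => /eqP.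
by [].
Qed.

Lemma enormE x : enorm x = Num.sqrt (sq x).
Proof. by rewrite /enorm /sq /dot; congr Num.sqrt; apply: eq_bigr => i _; rewrite expr2. Qed.

Lemma dot_mx x y : (x *m y^T) 0 0 = dot x y.
Proof. by rewrite !mxE; apply: eq_bigr => i _; rewrite !mxE. Qed.

Lemma orth_dot u V w : u *m V^T = 0 -> (w <= V)%MS -> dot u w = 0.
Proof.
move=> hu /submxP [k ->]; rewrite -dot_mx trmx_mul mulmxA hu mul0mx mxE //.
Qed.

Lemma sqB x y : sq (x - y) = sq x - 2 * dot x y + sq y.
Proof. rewrite /sq dotBl !dotBr (dotC y x); ring. Qed.

Lemma sqD x y : sq (x + y) = sq x + 2 * dot x y + sq y.
Proof. rewrite /sq dotDl !dotDr (dotC y x); ring. Qed.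

End Alg.

Section Proj.
Variables (R : realType) (n : nat).

Lemma rank_VVt (V : 'M[R]_n) : \rank (V *m V^T) = \rank V.
Proof.
have := mxrank_mul_ker V V^T.
suff -> : \rank (V :&: kermx V^T)%MS = 0%N by rewrite addn0.
apply/eqP; rewrite mxrank_eq0; apply/eqP/row_matrixP => i.
set W := (V :&: kermx V^T)%MS.
have hW : (row i W <= W)%MS by exact: row_sub.
have hV : (row i W <= V)%MS by apply: submx_trans hW (capmxSl _ _).
have hK : row i W *m V^T = 0.
  by apply/sub_kermxP; apply: submx_trans hW (capmxSr _ _).
rewrite row0; apply: sq_eq0; exact: orth_dot hK hV.
Qed.

Lemma proj_exists (V : 'M[R]_n) (x : 'rV[R]_n) : exists y, is_orth_proj V x y.
Proof.
have h1 : (x *m V^T <= V *m V^T)%MS.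
  have e : (V^T <= V *m V^T)%MS.
    have := mxrank_leqif_sup (submxMl V V^T).
    by rewrite rank_VVt mxrank_tr => -[_ <-].
  exact: submx_trans (submxMl _ _) e.
exists (x *m V^T *m pinvmx (V *m V^T) *m V); split.
  exact: submxMl.
by rewrite mulmxBl -(mulmxA _ V) mulmxKpV // subrr.
Qed.

Lemma rank_ext m (A : 'M[R]_(m, n)) k : (\rank A <= k <= n)%N ->
  exists V : 'M[R]_n, \rank V = k /\ (A <= V)%MS.
Proof.
move=> /andP [hAk hkn].
suff: forall j, (\rank A + j <= n)%N -> exists V : 'M[R]_n, \rank V = (\rank A + j)%N /\ (A <= V)%MS.
  by move=> /(_ (k - \rank A)%N); rewrite subnKC //; apply.
elim=> [|j IH] hj.
  by exists <<A>>%MS; rewrite genmxE addn0 genmxE; split.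
have hj' : (\rank A + j <= n)%N by rewrite addnS in hj; exact: ltnW.
have [V [hV hAV]] := IH hj'.
have : exists i : 'I_n, ~~ (row i (1%:M : 'M[R]_n) <= V)%MS.
  apply/existsP; rewrite -negb_forall; apply/negP => /forallP hall.
  have : (1%:M <= V)%MS by apply/row_subP => i; exact: hall.
  move/mxrankS; rewrite mxrank1 hV => h.
  by move: hj; rewrite addnS ltnNge h.
move=> [i hi]; set e := row i (1%:M : 'M[R]_n).
exists (V + e)%MS; split; last by apply: submx_trans hAV (addsmxSl _ _).
have he1 : \rank e = 1%N.
  rewrite rank_rV; case: eqP => // e0; move: hi; rewrite -/e e0 sub0mx //.
have hcap : \rank (V :&: e)%MS = 0%N.
  have := mxrank_leqif_sup (capmxSr V e).
  case: (ltngtP (\rank (V :&: e)%MS) (\rank e)) => [|h|h].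
  - by rewrite he1 ltnS leqn0 => /eqP.
  - by case; rewrite leqNgt h.
  - case=> _; rewrite h eqxx => /esym hs.
    by move: hi; rewrite (submx_trans hs (capmxSl _ _)).
have := mxrank_sum_cap V e.
rewrite hcap he1 hV addn0 => ->; by rewrite addn1 addnS.
Qed.
End Proj.

Section An.
Variables (R : realType) (n : nat).

Lemma sq_cont : continuous (@sq R n).
Proof.
rewrite /sq /dot.
apply: (@continuous_big _ _ +%R 0 xpredT add_continuous _ (index_enum _) (fun i (x : 'rV[R]_n) => x ord0 i * x ord0 i)).
by move=> i _ y; apply: continuousM; apply: coord_continuous.
Qed.

Lemma sqB_cont (z : 'rV[R]_n) : continuous (fun x : 'rV[R]_n => sq (z - x)).
Proof.
move=> x; apply: (@continuous_comp _ _ _ (fun y : 'rV[R]_n => z - y) (@sq R n)); last exact: sq_cont.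
apply: continuousB; [exact: cst_continuous | by move=> ?; exact: cvg_id].
Qed.

Lemma sqP_cont : continuous (fun pr : 'rV[R]_n * 'rV[R]_n => sq (pr.1 - pr.2)).
Proof.
move=> x; apply: (continuous_comp (f := fun pr : 'rV[R]_n * 'rV[R]_n => pr.1 - pr.2)); last exact: sq_cont.
exact: sub_continuous.
Qed.
End An.
Section Diam.
Variables (R : realType) (n : nat).

Lemma diam_max (S : set 'rV[R]_n) : compact S -> S !=set0 ->
  exists p q, [/\ S p, S q, diam S = enorm (q - p) &
    forall x y, S x -> S y -> sq (x - y) <= sq (q - p)].
Proof.
move=> cS [x0 Sx0].
have [c] := @compact_EVT_max _ R (fun pr : 'rV[R]_n * 'rV[R]_n => sq (pr.1 - pr.2)) (S `*` S)
  (ex_intro _ (x0, x0) (conj Sx0 Sx0)) (compact_setX cS cS)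
  (continuous_subspaceT (@sqP_cont R n)).
rewrite inE => -[Sc1 Sc2] hc.
have hb : forall x y, S x -> S y -> sq (x - y) <= sq (c.1 - c.2).
  by move=> x y Sx Sy; apply: (hc (x, y)); rewrite inE.
exists c.2, c.1; split => //.
have ub : ubound [set enorm (x - y) | x in S & y in S] (enorm (c.1 - c.2)).
  move=> r [x Sx [y Sy <-]]; rewrite !enormE; apply: ler_wsqrtr; exact: hb.
apply/le_anti/andP; split.
  apply: ge_sup => //; exists (enorm (c.1 - c.2)); exists c.1 => //; exists c.2 => //.
apply: ub_le_sup; first by exists (enorm (c.1 - c.2)).
by exists c.1 => //; exists c.2.
Qed.
End Diam.
Section Near.
Variables (R : realType) (n : nat).

Lemma nearest (L : set 'rV[R]_n) (z : 'rV[R]_n) : compact L -> convex_set_Rn L ->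
  L !=set0 -> exists2 y, L y & forall x, L x -> dot (x - y) (z - y) <= 0.
Proof.
move=> cL vL neL.
have [y] := @compact_EVT_min _ R (fun x : 'rV[R]_n => sq (z - x)) L neL cL
  (continuous_subspaceT (@sqB_cont R n z)).
rewrite inE => Ly hy; exists y => // x Lx.
rewrite leNgt; apply/negP => hc.
set c := dot (x - y) (z - y) in hc.
set s := sq (x - y).
have s0 : 0 <= s by exact: sq_ge0.
set l := c / (s + c).
have l0 : 0 < l by apply: divr_gt0 => //; lra.
have l1 : l <= 1 by rewrite ler_pdivrMr; lra.
have Lm : L (l *: x + (1 - l) *: y) by apply: vL => //; rewrite (ltW l0) l1.
have := hy _ (mem_set Lm).
have -> : z - (l *: x + (1 - l) *: y) = (z - y) - l *: (x - y).
  by apply/rowP => i; rewrite !mxE; ring.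
rewrite [sq (z - y - _)]sqB dotZr dotC -/c /sq dotZl dotZr -/(sq (x - y)) -/s.
have hls : l * s < c.
  rewrite /l mulrAC ltr_pdivrMr; last lra.
  have : 0 < c * c by apply: mulr_gt0.
  nra.
nra.
Qed.
End Near.

Lemma sq_sqrt_eq (R : realType) n (x y : 'rV[R]_n) : enorm x = enorm y -> sq x = sq y.
Proof.
rewrite !enormE => h.
by rewrite -(sqr_sqrtr (sq_ge0 x)) -(sqr_sqrtr (sq_ge0 y)) h.
Qed.

Theorem corollary2p7 (R : realType) (n d : nat) (K L : set 'rV[R]_n) :
  compact K -> convex_set_Rn K ->
  compact L -> convex_set_Rn L ->
  (2 <= d)%N -> (d <= n)%N ->
  (forall V : 'M[R]_n, \rank V = d ->
     contains_translate (proj_set V L) (proj_set V K)) ->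
  diam K = diam L ->
  contains_translate L K.
Proof.
move=> cK vK cL vL hd2 hdn hproj hdiam.
case: (pselect (K !=set0)) => [neK|eK]; last first.
  by exists 0 => ? [a Ka _]; exfalso; apply: eK; exists a.
have [p [q [Kp Kq dK hK]]] := diam_max cK neK.
set v := q - p.
have [V0 [rV0 vV0]] : exists V : 'M[R]_n, \rank V = d /\ (v <= V)%MS.
  apply: rank_ext; rewrite hdn andbT; apply: leq_trans (rank_leq_row _) _.
  exact: leq_trans hd2.
have [t0 ht0] := hproj V0 rV0.
have [p00 hp00] := proj_exists V0 p.
have neL : L !=set0.
  have [l Ll _] : proj_set V0 L (p00 + t0) by apply: ht0; exists p00 => //; exists p.
  by exists l.
have [p' [q' [Lp' Lq' dL hL]]] := diam_max cL neL.
have sqv : sq (q' - p') = sq v by apply: sq_sqrt_eq; rewrite -dL -hdiam dK.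
have bL : forall x y, L x -> L y -> sq (x - y) <= sq v by move=> x y Lx Ly; rewrite -sqv; exact: hL.
have chord : forall V : 'M[R]_n, (v <= V)%MS -> forall t,
    [set a + t | a in proj_set V K] `<=` proj_set V L ->
    exists l1 l2, [/\ L l1, L l2, l2 - l1 = v & (l1 - p - t) *m V^T = 0].
  move=> V vV t ht.
  have [p0 [p0V hp0]] := proj_exists V p.
  have [q0 [q0V hq0]] := proj_exists V q.
  have [l1 L1 [_ h1]] : proj_set V L (p0 + t) by apply: ht; exists p0 => //; exists p.
  have [l2 L2 [_ h2]] : proj_set V L (q0 + t) by apply: ht; exists q0 => //; exists q.
  exists l1, l2; split => //; last first.
    have -> : l1 - p - t = (l1 - (p0 + t)) - (p - p0) by apply/rowP => i; rewrite !mxE; ring.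
    by rewrite mulmxBl h1 hp0 subr0.
  set e := l2 - l1 - v.
  have eV : e *m V^T = 0.
    have -> : e = (l2 - (q0 + t)) - (l1 - (p0 + t)) - (q - q0) + (p - p0).
      by apply/rowP => i; rewrite !mxE; ring.
    move: h1 h2 hp0 hq0; set A1 := l2 - (q0 + t); set A2 := l1 - (p0 + t);
    set A3 := q - q0; set A4 := p - p0 => h1 h2 h3 h4.
    clearbody A1 A2 A3 A4.
    by rewrite mulmxDl !mulmxBl h1 h2 h3 h4 !subr0 addr0.
  have de : dot e v = 0 by exact: orth_dot eV vV.
  have := bL _ _ L2 L1.
  have -> : l2 - l1 = v + e by rewrite /e; apply/rowP => i; rewrite !mxE; ring.
  rewrite sqD dotC de mulr0 addr0 -lerBrDl subrr => se.
  have : sq e = 0 by apply/le_anti; rewrite se sq_ge0.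
  by move/sq_eq0 => e0; rewrite e0 addr0.
have uniq : forall l1 l2 l1' l2', L l1 -> L l2 -> L l1' -> L l2' ->
    l2 - l1 = v -> l2' - l1' = v -> l1 = l1'.
  move=> l1 l2 l1' l2' L1 L2 L1' L2' e1 e2.
  have E1 : l2 - l1' = v + (l1 - l1') by rewrite -e1; apply/rowP => i; rewrite !mxE; ring.
  have E2 : l2' - l1 = v - (l1 - l1') by rewrite -e2; apply/rowP => i; rewrite !mxE; ring.
  have h1 := bL _ _ L2 L1'; have h2 := bL _ _ L2' L1.
  rewrite E1 sqD in h1; rewrite E2 sqB in h2.
  have hge := sq_ge0 (l1 - l1').
  have : sq (l1 - l1') = 0 by apply/le_anti; rewrite hge andbT; lra.
  by move/sq_eq0 => /eqP; rewrite subr_eq0 => /eqP.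
have [a [a2 [La La2 ea _]]] := chord V0 vV0 t0 ht0.
exists (a - p) => _ [z Kz <-].
set z' := z + (a - p).
case: (pselect (L z')) => // hnot; exfalso.
have [y Ly hy] := nearest z' cL vL neL.
set w := z' - y.
have w0 : w != 0.
  apply/eqP => ew; apply: hnot.
  have -> : z' = y by apply/eqP; rewrite -subr_eq0 -/w ew.
  exact: Ly.
have [V [rV hV]] : exists V : 'M[R]_n, \rank V = d /\ (col_mx v w <= V)%MS.
  apply: rank_ext; rewrite hdn andbT; apply: leq_trans (rank_leq_row _) _; exact: hd2.
move: hV; rewrite col_mx_sub => /andP [vV wV].
have [t ht] := hproj V rV.
have [l1 [l2 [L1 L2 e12 hl1]]] := chord V vV t ht.
have el1 : l1 = a by apply: (uniq _ _ _ _ L1 L2 La La2 e12 ea).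
rewrite el1 in hl1.
have [z0 [z0V hz0]] := proj_exists V z.
have [x Lx [_ hx]] : proj_set V L (z0 + t) by apply: ht; exists z0 => //; exists z.
have hxz : (x - z') *m V^T = 0.
  have -> : x - z' = (x - (z0 + t)) - (z - z0) - (a - p - t) by rewrite /z'; apply/rowP => i; rewrite !mxE; ring.
  move: hx hz0 hl1; set A1 := x - (z0 + t); set A2 := z - z0; set A3 := a - p - t.
  clearbody A1 A2 A3 => h1 h2 h3.
  by rewrite !mulmxBl h1 h2 h3 !subr0.
have d0 : dot (x - z') w = 0 by exact: orth_dot hxz wV.
have := hy x Lx.
have -> : x - y = (x - z') + w by rewrite /w; apply/rowP => i; rewrite !mxE; ring.
rewrite dotDl d0 add0r -/w.
have : sq w != 0 by apply/eqP => /sq_eq0 /eqP; apply/negP.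
have := sq_ge0 w; rewrite /sq => h1 h2 h3.
have : dot w w = 0 by apply/le_anti; rewrite h1 h3.
by move/eqP; rewrite (negbTE h2).
Qed.
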